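(* Let $n\ge 4$ and let $S\subseteq\mathbb{Z}_n$ with $0\notin S$, $S=-S$, such that $\mathrm{Cay}(\mathbb{Z}_n,S)$ is connected, and let $k=|S|$. If $k$ divides $n$ and $s\not\equiv s'\pmod k$ for all distinct $s,s'\in S$, then $\mathrm{Cay}(\mathbb{Z}_n,S)$ admits a total perfect code.
   Context: Elements of $\mathbb{Z}_n$ are identified with integers in $\{0,1,\dots,n-1\}$. The circulant graph $\mathrm{Cay}(\mathbb{Z}_n,S)$ has vertex set $\mathbb{Z}_n$ with $u,v$ adjacent iff $v-u\in S$; its degree is $|S|$. A total perfect code in a graph $\Gamma=(V,E)$ is a subset $C\subseteq V$ such that every vertex of $V$ has exactly one neighbour in $C$. *)

(* Defs.v *)
From mathcomp Require Import all_boot all_order all_algebra.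
Set Implicit Arguments. Unset Strict Implicit. Unset Printing Implicit Defensive.
Import GRing.Theory.
Local Open Scope ring_scope.

Definition cay_adj (n : nat) (S : {set 'Z_n}) : rel 'Z_n :=
  fun u v => (v - u) \in S.

Definition cay_connected (n : nat) (S : {set 'Z_n}) : Prop :=
  forall u v : 'Z_n, connect (cay_adj S) u v.

Definition total_perfect_code (n : nat) (S : {set 'Z_n}) (C : {set 'Z_n}) : Prop :=
  forall v : 'Z_n, #|[set c in C | cay_adj S v c]| = 1%N.

(* Main.v *)
Require Import Defs.
From mathcomp Require Import all_boot all_order all_algebra.
Import GRing.Theory.
Local Open Scope ring_scope.

Lemma valZD (n k : nat) (a b : 'Z_n) : (1 < n)%N -> (k %| n)%N ->
  ((nat_of_ord (a + b)%R) %% k = (nat_of_ord a + nat_of_ord b) %% k)%N.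
Proof.
move=> n1 kn.
have kn' : (k %| (Zp_trunc n).+2)%N by rewrite (Zp_cast n1).
have -> : nat_of_ord (a + b)%R = ((nat_of_ord a + nat_of_ord b) %% (Zp_trunc n).+2)%N.
  by [].
by rewrite modn_dvdm.
Qed.

Theorem lemma2p5 (n : nat) (S : {set 'Z_n}) :
  (4 <= n)%N ->
  0 \notin S ->
  (forall s : 'Z_n, s \in S -> - s \in S) ->
  cay_connected S ->
  (#|S| %| n)%N ->
  (forall s s' : 'Z_n, s \in S -> s' \in S -> s != s' ->
     (nat_of_ord s %% #|S| != nat_of_ord s' %% #|S|)%N) ->
  exists C : {set 'Z_n}, total_perfect_code S C.
Proof.
move=> n4 _ _ _ kn Hinj.
have n1 : (1 < n)%N by apply: leq_trans n4.
set k := #|S| in kn Hinj.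
case Ek: k => [|k'].
  by move: kn; rewrite Ek dvd0n => /eqP n0; exfalso; move: n1; rewrite n0.
have inj : forall s s', s \in S -> s' \in S ->
    (nat_of_ord s %% k = nat_of_ord s' %% k)%N -> s = s'.
  move=> s s' hs hs' e; apply/eqP; apply/negPn/negP => ne.
  by move: (Hinj s s' hs hs' ne); rewrite e eqxx.
pose f (s : 'Z_n) : 'I_k'.+1 := inord (nat_of_ord s %% k).
have fv s : nat_of_ord (f s) = (nat_of_ord s %% k)%N.
  by rewrite /f inordK // -Ek ltn_mod Ek.
have imT : f @: S = [set: 'I_k'.+1].
  apply/eqP; rewrite eqEcard subsetT /= cardsT card_ord.
  rewrite card_in_imset; first by rewrite -/k Ek.
  move=> s s' hs hs' e.
  by apply: inj => //; rewrite -!fv e.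
exists [set c : 'Z_n | (nat_of_ord c %% k == 0)%N] => v.
pose t : 'I_k'.+1 := inord ((k - nat_of_ord v %% k) %% k).
have : t \in f @: S by rewrite imT inE.
case/imsetP => s hs ht.
have hvs : ((nat_of_ord v + nat_of_ord s) %% k = 0)%N.
  have : (nat_of_ord s %% k = (k - nat_of_ord v %% k) %% k)%N.
    by rewrite -fv -ht /t inordK // -Ek ltn_mod Ek.
  move=> e; rewrite -modnDmr e modnDmr.
  have kp : (0 < k)%N by rewrite Ek.
  have lt : (nat_of_ord v %% k <= k)%N by apply: ltnW; rewrite ltn_mod.
  by rewrite -modnDml addnBCA // ?leqnn // subnn addn0 modnn.
have -> : [set c in [set c : 'Z_n | (nat_of_ord c %% k == 0)%N] | cay_adj S v c]
    = [set v + s].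
  apply/setP => c; rewrite !inE /cay_adj.
  apply/idP/idP.
  - case/andP => hc hcs.
    have e : c = v + (c - v) by rewrite addrC subrK.
    have : (nat_of_ord v + nat_of_ord (c - v)%R == nat_of_ord v + nat_of_ord s %[mod k])%N.
      by rewrite -(valZD _ _ _ _ n1 kn) -e (eqP hc) hvs.
    rewrite eqn_modDl => /eqP h.
    by rewrite e (inj _ _ hcs hs h).
  - move/eqP => ->; rewrite (valZD _ _ _ _ n1 kn) hvs eqxx /=.
    by rewrite addrAC subrr add0r.
by rewrite cards1.
Qed.
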